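(* Let $\kappa<\Gamma$ be infinite cardinals, and let $K^{\kappa,\Gamma}$ be a compact space such that $C(K^{\kappa,\Gamma})$ is isometric to $X^{\kappa,\Gamma}$ via a linear isometry preserving pointwise multiplication and order. Then $C(K^{\kappa,\Gamma})$ is $\kappa$-complete, i.e. every subset of $C(K^{\kappa,\Gamma})$ of cardinality at most $\kappa$ which is bounded above has a supremum in $C(K^{\kappa,\Gamma})$ with respect to the pointwise order; nevertheless $C(K^{\kappa,\Gamma})$ fails the ball fixed point property.
   Context: $X^{\kappa,\Gamma}=\{f\in\ell_\infty(\Gamma):\exists A\subseteq\Gamma,\ |A|=\kappa,\ f|_{\Gamma\setminus A}\text{ is constant}\}$ with the sup norm, where $\ell_\infty(\Gamma)$ is the space of bounded real functions on $\Gamma$. $C(K)$ is the real Banach space of continuous functions on compact $K$ with the sup norm, ordered pointwise. A real Banach space $X$ has the ball fixed point property (BFPP) if every nonexpansive map $T\colon B_X\to B_X$ (i.e. $\|Tx-Ty\|\le\|x-y\|$) has a fixed point, where $B_X$ is the closed unit ball. *)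

(* Defs.v *)
From HB Require Import structures.
From mathcomp Require Import all_boot all_order all_algebra.
From mathcomp Require Import all_classical all_reals all_analysis.
Unset Printing Implicit Defensive.
Import Order.TTheory GRing.Theory Num.Theory numFieldNormedType.Exports.
Local Open Scope classical_set_scope.
Local Open Scope ring_scope.

Definition supnorm (R : realType) (T : Type) (f : T -> R) : R :=
  sup [set `|f x| | x in [set: T]].

Definition CK (R : realType) (K : topologicalType) : set (K -> R) :=
  [set f : K -> R | continuous f].

Definition Xkg (R : realType) (Kappa Gamma : Type) : set (Gamma -> R) :=
  [set f | (exists M : R, forall g, `|f g| <= M) /\
           exists (A : set Gamma) (c : R),
             (A #= [set: Kappa])%card /\ forall g, ~ A g -> f g = c].

Definition ptle (R : realType) (T : Type) (f g : T -> R) := forall x, f x <= g x.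

Definition kappa_complete (R : realType) (Kappa : Type) (K : topologicalType) :=
  forall S : set (K -> R), S `<=` CK R K -> S !=set0 ->
    (S #<= [set: Kappa])%card ->
    (exists u, CK R K u /\ forall f, S f -> ptle R K f u) ->
    exists s, CK R K s /\ (forall f, S f -> ptle R K f s) /\
      forall u, CK R K u -> (forall f, S f -> ptle R K f u) -> ptle R K s u.

Definition ballCK (R : realType) (K : topologicalType) : set (K -> R) :=
  [set f | CK R K f /\ supnorm R K f <= 1].

Definition CK_BFPP (R : realType) (K : topologicalType) :=
  forall F : (K -> R) -> (K -> R),
    (forall f, ballCK R K f -> ballCK R K (F f)) ->
    (forall f g, ballCK R K f -> ballCK R K g ->
       supnorm R K (F f - F g) <= supnorm R K (f - g)) ->
    exists f, ballCK R K f /\ F f = f.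

(* Main.v *)
Require Import Defs.
From HB Require Import structures.
From mathcomp Require Import all_boot all_order all_algebra.
From mathcomp Require Import all_classical all_reals all_analysis.
From mathcomp Require Import wochoice.
From Stdlib Require Cantor.
From mathcomp Require Import lra.
Import Order.TTheory GRing.Theory Num.Theory numFieldNormedType.Exports.
Local Open Scope classical_set_scope.
Local Open Scope ring_scope.
Definition myle {T U} (A : set T) (B : set U) := exists f : T -> U,
  (forall x, A x -> B (f x)) /\ (forall x y, A x -> A y -> f x = f y -> x = y).

Lemma myle_card {T U} (A : set T) (B : set U) : myle A B -> (A #<= B)%card.
Proof.
move=> [f [fAB finj]].
have : $|{injfun A >-> B}|.
  apply/injfunPex; exists f; first by move=> x Ax; exact: fAB.
  by move=> x y /set_mem Ax /set_mem Ay; exact: finj.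
by case=> g; exact: inj_card_le.
Qed.

Lemma card_myle {T U} (A : set T) (B : set U) (u0 : U) : (A #<= B)%card -> myle A B.
Proof.
move=> /card_leP [f].
pose h (t : T) : U := match pselect (A t) with
  | left H => val (f (SigSub (mem_set H))) | right _ => u0 end.
exists h; split.
- move=> x Ax; rewrite /h; case: pselect => // H.
  exact: set_mem (valP (f (SigSub (mem_set H)))).
- move=> x y Ax Ay; rewrite /h; case: pselect => // H; case: pselect => // H'.
  move=> /val_inj /(@inj _ _ _ f); rewrite !inE => /(_ I I) E.
  by move: (congr1 val E).
Qed.
Lemma myle_refl {T} (A : set T) : myle A A.
Proof. by exists id. Qed.

Lemma myle_trans {T U V} (A : set T) (B : set U) (C : set V) :
  myle A B -> myle B C -> myle A C.
Proof.
move=> [f [f1 f2]] [g [g1 g2]]; exists (g \o f); split=> [x Ax|x y Ax Ay /= E].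
  exact/g1/f1.
by apply: f2 => //; apply: g2 => //; exact: f1.
Qed.

Lemma myle_sub {T} (A B : set T) : A `<=` B -> myle A B.
Proof. by move=> AB; exists id; split=> // x; exact: AB. Qed.

Lemma pick_fun {T U} (u0 : U) (P : T -> U -> Prop) :
  exists f : T -> U, forall x, (exists y, P x y) -> P x (f x).
Proof.
have H0 : forall x, exists y : U, ((exists y, P x y) -> P x y).
  move=> x; have [[y Hy]|H] := pselect (exists y, P x y); first by exists y.
  by exists u0 => H'; case: H.
have [f Hf] := boolp.choice H0.
by exists f.
Qed.

Lemma myle_total {T U} (t0 : T) (u0 : U) (A : set T) (B : set U) :
  myle A B \/ myle B A.
Proof.
pose P (G : set (T * U)) := G `<=` A `*` B /\
  (forall a b b', G (a,b) -> G (a,b') -> b = b') /\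
  (forall a a' b, G (a,b) -> G (a',b) -> a = a').
have [G [[GAB [Gf Gi]] Gmax]] : exists G, P G /\ forall H, G `<` H -> ~ P H.
  apply: Zorn_bigcup => F FP Ftot; split; [|split].
  - by move=> p [X FX Xp]; exact: (FP X FX).1.
  - move=> a b b' [X FX Xp] [Y FY Yp].
    have [XY|YX] := Ftot X Y FX FY.
      by apply: (FP Y FY).2.1 (XY _ Xp) Yp.
    by apply: (FP X FX).2.1 Xp (YX _ Yp).
  - move=> a a' b [X FX Xp] [Y FY Yp].
    have [XY|YX] := Ftot X Y FX FY.
      by apply: (FP Y FY).2.2 (XY _ Xp) Yp.
    by apply: (FP X FX).2.2 Xp (YX _ Yp).
have [Htot|] := pselect (forall a, A a -> exists b, G (a,b)).
  left; have [f Hf] := pick_fun u0 (fun a b => G (a,b)).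
  exists f; split.
    by move=> x Ax; have := GAB _ (Hf x (Htot x Ax)) => -[].
  move=> x y Ax Ay E; apply: (Gi x y (f x)); first exact: Hf (Htot x Ax).
  by rewrite E; exact: Hf (Htot y Ay).
move=> /existsNP [a0 /not_implyP [Aa0 /forallNP na0]].
have [Htot|] := pselect (forall b, B b -> exists a, G (a,b)).
  right; have [f Hf] := pick_fun t0 (fun b a => G (a,b)).
  exists f; split.
    by move=> x Bx; have := GAB _ (Hf x (Htot x Bx)) => -[].
  move=> x y Bx By E; apply: (Gf (f x) x y); first exact: Hf (Htot x Bx).
  by rewrite E; exact: Hf (Htot y By).
move=> /existsNP [b0 /not_implyP [Bb0 /forallNP nb0]].
exfalso; apply: (Gmax (G `|` [set (a0, b0)])).
  split; first by move=> p Gp; left.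
  by move=> /(_ (a0, b0) (or_intror erefl)); exact: na0.
split; [|split].
- by move=> p [/GAB//|->]; split.
- move=> a b b' H1 H2; case: H1 => [Gab|[E1 E2]]; case: H2 => [Gab'|[E3 E4]]; subst.
  + exact: Gf Gab Gab'.
  + by case: (na0 b Gab).
  + by case: (na0 b' Gab').
  + by [].
- move=> a a' b H1 H2; case: H1 => [Gab|[E1 E2]]; case: H2 => [Gab'|[E3 E4]]; subst.
  + exact: Gi Gab Gab'.
  + by case: (nb0 a Gab).
  + by case: (nb0 a' Gab').
  + by [].
Qed.
Section Sq.
Variables (T : Type) (t0 : T) (A : set T) (e : nat -> T).
Hypothesis eA : forall i, A (e i).
Hypothesis einj : forall i j, e i = e j -> i = j.

Let dom (G : set ((T*T)*T)) : set T := [set a | exists b c, G ((a,b),c)].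
Let Q (G : set ((T*T)*T)) := dom G `<=` A /\
  (forall a b, dom G a -> dom G b -> exists c, G ((a,b),c)) /\
  (forall p c c', G (p,c) -> G (p,c') -> c = c') /\
  (forall p p' c, G (p,c) -> G (p',c) -> p = p') /\
  (forall a b c, G ((a,b),c) -> dom G b /\ dom G c) /\
  (dom G (e 0) /\ dom G (e 1) /\ dom G (e 2)).
Let P G := G = set0 \/ Q G.

Let G0 : set ((T*T)*T) :=
  [set q | exists i j, q = ((e i, e j), e (Cantor.to_nat (i,j)))].

Let domG0 a : dom G0 a <-> exists i, a = e i.
Proof.
split; first by move=> [b [c [i [j [-> _ _]]]]]; exists i.
by move=> [i ->]; exists (e i), (e (Cantor.to_nat (i,i))), i, i.
Qed.

Let QG0 : Q G0.
Proof.
split; [|split; [|split; [|split; [|split]]]].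
- by move=> a /domG0 [i ->].
- move=> a b /domG0 [i ->] /domG0 [j ->].
  by exists (e (Cantor.to_nat (i,j))), i, j.
- move=> p c c' [i [j E1]] [i' [j' E2]]; case: E1 => E3 E4; subst.
  by case: E2 => /einj <- /einj <- ->.
- move=> p p' c [i [j E1]] [i' [j' E2]]; case: E1 => E3 E4; subst.
  have E5 : e (Cantor.to_nat (i,j)) = e (Cantor.to_nat (i',j')) := congr1 snd E2.
  have E6 : p' = (e i', e j') := congr1 fst E2.
  rewrite E6; have := einj _ _ E5 => /(congr1 Cantor.of_nat).
  rewrite !Cantor.cancel_of_to.
  by case=> <- <-.
- move=> a b c [i [j E1]]; case: E1 => _ -> ->.
  by split; apply/domG0; [exists j|exists (Cantor.to_nat (i,j))].
- by split; [|split]; apply/domG0; eexists.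
Qed.

Let chainP (F : set (set ((T*T)*T))) : F `<=` P -> total_on F subset ->
  P (\bigcup_(X in F) X).
Proof.
move=> FP Ftot.
have [allE|] := pselect (forall X, F X -> X = set0).
  left; apply/seteqP; split=> // q [X FX Xq]; by rewrite (allE X FX) in Xq.
move=> /existsNP [X0 /not_implyP [FX0 X0n]].
have QX0 : Q X0 by case: (FP X0 FX0).
have QX : forall X q, F X -> X q -> Q X.
  move=> X q FX Xq; case: (FP X FX) => // E; by rewrite E in Xq.
have domU : forall a, dom (\bigcup_(X in F) X) a <-> exists2 X, F X & dom X a.
  move=> a; split; first by move=> [b [c [X FX Xq]]]; exists X => //; exists b, c.
  by move=> [X FX [b [c Xq]]]; exists b, c, X.
have big2 : forall X Y, F X -> F Y -> exists2 Z, F Z & X `<=` Z /\ Y `<=` Z.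
  move=> X Y FX FY; have [XY|YX] := Ftot X Y FX FY.
    by exists Y => //; split => //; exact: subset_refl.
  by exists X => //; split => //; exact: subset_refl.
have domS : forall X Y, X `<=` Y -> dom X `<=` dom Y.
  by move=> X Y XY a [b [c Xq]]; exists b, c; exact: XY.
right; split; [|split; [|split; [|split; [|split]]]].
- move=> a /domU [X FX dX]; have [b [c Xq]] := dX.
  by have [+ _] := QX X _ FX Xq; apply.
- move=> a b /domU [X FX dX] /domU [Y FY dY].
  have [Z FZ [XZ YZ]] := big2 X Y FX FY.
  have [b' [c' Zq]] := domS _ _ XZ _ dX.
  have [_ [Ztot _]] := QX Z _ FZ Zq.
  have [c Zc] := Ztot a b (domS _ _ XZ _ dX) (domS _ _ YZ _ dY).
  by exists c, Z.
- move=> p c c' [X FX Xp] [Y FY Yp].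
  have [Z FZ [XZ YZ]] := big2 X Y FX FY.
  have [_ [_ [Zf _]]] := QX Z _ FZ (XZ _ Xp).
  exact: Zf (XZ _ Xp) (YZ _ Yp).
- move=> p p' c [X FX Xp] [Y FY Yp].
  have [Z FZ [XZ YZ]] := big2 X Y FX FY.
  have [_ [_ [_ [Zi _]]]] := QX Z _ FZ (XZ _ Xp).
  exact: Zi (XZ _ Xp) (YZ _ Yp).
- move=> a b c [X FX Xq].
  have [_ [_ [_ [_ [Xv _]]]]] := QX X _ FX Xq.
  have [db dc] := Xv _ _ _ Xq.
  by split; apply/domU; exists X.
- have [_ [_ [_ [_ [_ [d0 [d1 d2]]]]]]] := QX0.
  by split; [|split]; apply/domU; exists X0.
Qed.

Lemma sq_le : myle (A `*` A) A.
Proof.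
have [G [PG Gmax]] := Zorn_bigcup chainP.
have {PG} [Gd [Gtot [Gf [Gi [Gv [D0 [D1 D2]]]]]]] : Q G.
  case: PG => // G0E; exfalso; apply: (Gmax G0); last by right.
  rewrite G0E; split=> // /(_ ((e 0, e 0), e (Cantor.to_nat (0,0)))%N).
  by apply; exists 0%N, 0%N.
pose D := dom G.
have [phi Hphi] := pick_fun t0 (fun p c => G (p, c)).
have phiG : forall a b, D a -> D b -> G ((a,b), phi (a,b)).
  by move=> a b Da Db; apply: (Hphi); exact: Gtot.
have phiD : forall a b, D a -> D b -> D (phi (a,b)).
  by move=> a b Da Db; have [] := Gv _ _ _ (phiG a b Da Db).
have phiI : forall a b a' b', D a -> D b -> D a' -> D b' ->
    phi (a,b) = phi (a',b') -> a = a' /\ b = b'.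
  move=> a b a' b' Da Db Da' Db' E.
  have := Gi _ _ _ (phiG a b Da Db); rewrite E => /(_ _ (phiG a' b' Da' Db')).
  by case=> -> ->.
have e01 : e 0 <> e 1 by move=> /einj.
have e02 : e 0 <> e 2 by move=> /einj.
have e12 : e 1 <> e 2 by move=> /einj.
suff ADle : myle A D.
  have [f [fAD finj]] := ADle.
  exists (fun p => phi (f p.1, f p.2)); split.
    by move=> [a b] [/= Aa Ab]; apply: (Gd); apply: (phiD); apply: (fAD).
  move=> [a b] [a' b'] [/= Aa Ab] [/= Aa' Ab'] /phiI [] //; try exact: fAD.
  by move=> /finj -> // /finj -> //.
have [h|h] := myle_total t0 t0 (A `\` D) D.
  have [g [gD ginj]] := h.
  exists (fun a => if pselect (D a) then phi (a, e 0) else phi (g a, e 1)).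
  split.
    move=> a Aa; case: pselect => Da; first exact: phiD.
    by apply: (phiD) => //; apply: (gD).
  have gD' : forall a, A a -> ~ D a -> D (g a) by move=> a Aa nDa; apply: (gD).
  move=> a a' Aa Aa'; case: pselect => Da; case: pselect => Da'.
  + by move=> /phiI [].
  + by move=> /phiI [] //; try exact: gD'; move=> _ E; case: e01.
  + by move=> /phiI [] //; try exact: gD'; move=> _ E; case: e01.
  + move=> /phiI [] //; try exact: gD'.
    by move=> /ginj ->.

exfalso.
have [h' [hA hinj]] := h.
pose E := h' @` D.
have ED : forall x, E x -> ~ D x by move=> x [d Dd <-] /= Dx; have [] := hA d Dd.
have EA : forall x, E x -> A x by move=> x [d Dd <-]; have [] := hA d Dd.
have [hinv Hhinv] := pick_fun t0 (fun x d => D d /\ h' d = x).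
have hinvP : forall x, E x -> D (hinv x) /\ h' (hinv x) = x.
  by move=> x [d Dd hx]; apply: Hhinv; exists d.
pose g x := if pselect (D x) then x else hinv x.
pose tagn x y := if pselect (D x) then 0%N else if pselect (D y) then 1%N else 2%N.
pose tag x y := e (tagn x y).
pose psi x y := h' (phi (phi (g x, g y), tag x y)).
have gD : forall x, D x \/ E x -> D (g x).
  move=> x; rewrite /g; case: pselect => // Dx [//|Ex]; exact: (hinvP x Ex).1.
have tagD : forall x y, D (tag x y).
  by move=> x y; rewrite /tag /tagn; case: pselect; case: pselect.
pose N : set ((T*T)*T) := [set q | exists x y, (D x \/ E x) /\ (D y \/ E y) /\
   ~ (D x /\ D y) /\ q = ((x,y), psi x y)].
have psiE : forall x y, D x \/ E x -> D y \/ E y -> E (psi x y).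
  move=> x y Hx Hy; exists (phi (phi (g x, g y), tag x y)) => //.
  by apply: (phiD) => //; apply: (phiD); apply: (gD).
have gI : forall x x', D x \/ E x -> D x' \/ E x' -> (D x <-> D x') ->
   g x = g x' -> x = x'.
  move=> x x' Hx Hx' Dxx'; rewrite /g; case: pselect => Dx; case: pselect => Dx' //.
  - by case: Dx'; apply/Dxx'.
  - by case: Dx; apply/Dxx'.
  - case: Hx => // Ex; case: Hx' => // Ex' E1.
    by move: E1 => /= E1; rewrite -(hinvP x Ex).2 E1 (hinvP x' Ex').2.
have psiI : forall x y x' y', D x \/ E x -> D y \/ E y -> D x' \/ E x' -> D y' \/ E y' ->
   ~ (D x /\ D y) -> ~ (D x' /\ D y') ->
   psi x y = psi x' y' -> x = x' /\ y = y'.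
  move=> x y x' y' Hx Hy Hx' Hy' nxy nxy' /hinj.
  move=> /(_ (phiD _ _ (phiD _ _ (gD _ Hx) (gD _ Hy)) (tagD _ _))).
  move=> /(_ (phiD _ _ (phiD _ _ (gD _ Hx') (gD _ Hy')) (tagD _ _))).
  move=> /phiI [] //; try exact: tagD; try (apply: (phiD); exact: gD).
  move=> /phiI [] //; try exact: gD.
  move=> g1 g2 /einj t12.
  have [Dxx' Dyy'] : (D x <-> D x') /\ (D y <-> D y').
    move: t12; rewrite /tagn.
    case: (pselect (D x)) => Dx; case: (pselect (D y)) => Dy;
    case: (pselect (D x')) => Dx'; case: (pselect (D y')) => Dy' => /= H;
    try discriminate; tauto.
  by split; apply: gI.
pose G' := G `|` N.
apply: (Gmax G').
  split; first by move=> q Gq; left.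
  move=> /(_ ((h' (e 0), h' (e 0)), psi (h' (e 0)) (h' (e 0)))).
  have E0 : E (h' (e 0)) by exists (e 0).
  have Gn : ~ G (h' (e 0), h' (e 0), psi (h' (e 0)) (h' (e 0))).
    by move=> Gq; apply: (ED _ E0); exists (h' (e 0)), (psi (h' (e 0)) (h' (e 0))).
  move=> H; apply: Gn; apply: H; right; exists (h' (e 0)), (h' (e 0)).
  split; [by right|split; [by right|split=> //]].
  by move=> [Dx _]; exact: ED E0 Dx.
have domG' : forall a, dom G' a <-> D a \/ E a.
  move=> a; split.
    move=> [b [c [Gq|[x [y [Hx [Hy [_ q]]]]]]]]; first by left; exists b, c.
    by case: q => -> _ _.
  move=> [Da|Ea]; first by have [b [c Gq]] := Da; exists b, c; left.
  exists a, (psi a a); right; exists a, a; split; [by right|split; [by right|split=> //]].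
  by move=> [Da _]; exact: ED Ea Da.
right; split; [|split; [|split; [|split; [|split]]]].
- by move=> a /domG' [/Gd|/EA].
- move=> a b /domG' Ha /domG' Hb.
  have [[Da Db]|nab] := pselect (D a /\ D b).
    by exists (phi (a,b)); left; exact: phiG.
  by exists (psi a b); right; exists a, b.
- move=> p c c' [Gc|[x [y [Hx [Hy [nxy q]]]]]] [Gc'|[x' [y' [Hx' [Hy' [nxy' q']]]]]].
  + exact: Gf Gc Gc'.
  + case: q' => E1 E2; subst; exfalso; apply: nxy'.
    by have [db _] := Gv _ _ _ Gc; split => //; exists y', c.
  + case: q => E1 E2; subst; exfalso; apply: nxy.
    by have [db _] := Gv _ _ _ Gc'; split => //; exists y, c'.
  + case: q => E1 E2; case: q' => E3 E4; subst.
    by case: E3 => -> ->.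
- move=> p p' c [Gc|[x [y [Hx [Hy [nxy q]]]]]] [Gc'|[x' [y' [Hx' [Hy' [nxy' q']]]]]].
  + exact: Gi Gc Gc'.
  + case: q' => E1 E2; subst p' c; exfalso.
    move: Gc; case: p => a b Gc.
    have [_ dc] := Gv _ _ _ Gc; exact: ED (psiE _ _ Hx' Hy') dc.
  + case: q => E1 E2; subst p c; exfalso.
    move: Gc'; case: p' => a b Gc'.
    have [_ dc] := Gv _ _ _ Gc'; exact: ED (psiE _ _ Hx Hy) dc.
  + case: q => -> E1; case: q' => -> E2; subst.
    by have [-> ->] := psiI _ _ _ _ Hx Hy Hx' Hy' nxy nxy' E2.
- move=> a b c [Gc|[x [y [Hx [Hy [nxy q]]]]]].
    have [db dc] := Gv _ _ _ Gc.
    by split; apply/domG'; left.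
  case: q => _ -> ->; split; apply/domG'; first by [].
  by right; exact: psiE.
- by split; [|split]; apply/domG'; left.
Qed.
End Sq.
Section Small.
Variables (U : Type) (C : set U) (e : nat -> U).
Hypothesis eC : forall i, C (e i).
Hypothesis einj : forall i j, e i = e j -> i = j.

Lemma sqC : myle (C `*` C) C.
Proof. exact: (@sq_le U (e 0) C e eC einj). Qed.

Lemma small_U2 {T} (X Y : set T) : myle X C -> myle Y C -> myle (X `|` Y) C.
Proof.
move=> [f [fC finj]] [g [gC ginj]].
apply: myle_trans sqC.
exists (fun x => if pselect (X x) then (f x, e 0) else (g x, e 1)); split.
  move=> x XYx; case: pselect => Xx; first by split => /=; [exact: fC|exact: eC].
  split => /=; [apply: (gC); by case: XYx|exact: eC].
move=> x y XYx XYy; case: pselect => Xx; case: pselect => Xy.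
- by case=> /finj ->.
- by case=> _ /einj.
- by case=> _ /einj.
- case=> /ginj -> //; [by case: XYx|by case: XYy].
Qed.

Lemma small_set1 {T} (x : T) : myle [set x] C.
Proof. by exists (fun=> e 0); split=> // a b -> ->. Qed.

Lemma small_bigcup {I T} (J : set I) (F : I -> set T) :
  myle J C -> (forall i, J i -> myle (F i) C) -> myle (\bigcup_(i in J) F i) C.
Proof.
move=> [iota [iC iinj]] FC.
have [[x0 [i0 Ji0 Fx0]]|] := pselect (exists x, (\bigcup_(i in J) F i) x); last first.
  move=> /forallNP H; exists (fun=> e 0); split; first by move=> x Ux.
  by move=> x y Ux; case: (H x).
have H0 : forall i, exists f : T -> U, J i -> (forall x, F i x -> C (f x)) /\
    (forall x y, F i x -> F i y -> f x = f y -> x = y).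
  move=> i; have [Ji|nJi] := pselect (J i).
    by have [f Hf] := FC i Ji; exists f.
  by exists (fun=> e 0).
have [fam Hfam] := boolp.choice H0.
have [idx Hidx] := pick_fun i0 (fun x i => J i /\ F i x).
apply: myle_trans sqC.
exists (fun x => (iota (idx x), fam (idx x) x)); split.
  move=> x Ux; have [Ji Fi] : J (idx x) /\ F (idx x) x.
    by apply: Hidx; case: Ux => i Ji Fi; exists i.
  by split; [exact: iC|exact: (Hfam _ Ji).1].
move=> x y Ux Uy; have [Ji Fi] : J (idx x) /\ F (idx x) x.
  by apply: Hidx; case: Ux => i Ji Fi; exists i.
have [Jj Fj] : J (idx y) /\ F (idx y) y.
  by apply: Hidx; case: Uy => i Ji' Fi'; exists i.
case=> /iinj E1 E2.
have Eij := E1 Ji Jj; rewrite -Eij in Fj E2.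
exact: (Hfam _ Ji).2 _ _ Fi Fj E2.
Qed.

Lemma enlarge {G} (S : set G) : myle S C -> myle C [set: G] ->
  exists A, S `<=` A /\ myle A C /\ myle C A.
Proof.
move=> SC [j [_ jinj]].
exists (S `|` j @` C); split; first by move=> x Sx; left.
split; last first.
  by exists j; split=> [x Cx|]; [right; exists x|move=> x y Cx Cy /jinj; apply].
apply: small_U2 => //.
have [jinv Hjinv] := pick_fun (e 0) (fun y x => C x /\ j x = y).
exists jinv; split.
  by move=> y [x Cx <-]; have [] := Hjinv (j x) (ex_intro _ x (conj Cx erefl)).
move=> y y' [x Cx <-] [x' Cx' <-] E.
have [_ E1] := Hjinv (j x) (ex_intro _ x (conj Cx erefl)).
have [_ E2] := Hjinv (j x') (ex_intro _ x' (conj Cx' erefl)).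
by rewrite -E1 -E2 E.
Qed.

End Small.
Lemma wo_exists (G : Type) : exists R : G -> G -> Prop,
  (forall x y, R x y \/ R y x) /\ (forall x y, R x y -> R y x -> x = y) /\
  (forall x y z, R x y -> R y z -> R x z) /\
  (forall S : set G, (exists x, S x) -> exists z, S z /\ forall y, S y -> R z y).
Proof.
elim/Peq : G => G.
have [R wR] := well_ordering_principle G.
have Rmin : forall S : set G, (exists x, S x) ->
    exists z, S z /\ forall y, S y -> R z y.
  move=> S [x Sx].
  have [z [[zA zlb] _]] := wR (fun x => `[< S x >]) (ex_intro _ x (asboolT Sx)).
  exists z; split; first exact: (asboolW zA).
  by move=> y Sy; apply: zlb; exact: asboolT.
have Rtot : forall x y, R x y \/ R y x.
  move=> x y; have [z [[->|->] H]] := Rmin [set x; y] (ex_intro _ x (or_introl erefl)).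
    by left; apply: H; right.
  by right; apply: H; left.
have Ruq : forall x y, R x y -> R y x -> x = y.
  move=> x y Rxy Ryx.
  have [z [[z1 z2] zu]] := wR (fun t => `[< t = x \/ t = y >])
    (ex_intro _ x (asboolT (or_introl erefl))).
  have hx : z = x.
    apply: zu; split; first exact: asboolT (or_introl erefl).
    by move=> t /asboolW [->|->] //; case: (Rtot x x).
  have hy : z = y.
    apply: zu; split; first exact: asboolT (or_intror erefl).
    by move=> t /asboolW [->|->] //; case: (Rtot y y).
  by rewrite -hx -hy.
exists (fun x y => R x y); split => //; split => //; split => //.
move=> x y z Rxy Ryz.
have [m [Hm mlb]] := Rmin [set t | t = x \/ t = y \/ t = z]
  (ex_intro _ x (or_introl erefl)).
case: Hm => [E|[E|E]]; subst m.
- by apply: mlb; right; right.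
- have Ryx : R y x by apply: mlb; left.
  by have exy := Ruq _ _ Rxy Ryx; rewrite exy.
- have Rzy : R z y by apply: mlb; right; left.
  by have eyz := Ruq _ _ Ryz Rzy; rewrite -eyz.
Qed.
Section Liminf.
Variables (R : realType) (Gm : Type) (le : Gm -> Gm -> Prop) (W : set Gm).
Hypothesis letot : forall x y, le x y \/ le y x.
Hypothesis leanti : forall x y, le x y -> le y x -> x = y.
Hypothesis letrans : forall x y z, le x y -> le y z -> le x z.
Let lt a b := le a b /\ a <> b.

Definition Iv (x : Gm -> R) (g a : Gm) : R :=
  inf [set x b | b in [set b | W b /\ le g b /\ lt b a]].
Definition Lv (x : Gm -> R) (a : Gm) : R :=
  sup [set Iv x g a | g in [set g | W g /\ lt g a]].

Let bnd (x : Gm -> R) := forall b, `|x b| <= 1.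

Lemma Iv_le {x : Gm -> R} {g a b} : bnd x -> W b -> le g b -> lt b a -> Iv x g a <= x b.
Proof.
move=> bx Wb gb ba; apply: (ge_inf); last by exists b.
exists (-1) => _ [t _ <-]; have := bx t; rewrite ler_norml; by case/andP.
Qed.

Lemma Iv_ge {x : Gm -> R} {g a} : bnd x -> W g -> lt g a -> -1 <= Iv x g a.
Proof.
move=> bx Wg ga; apply: lb_le_inf; first by exists (x g), g; split=> //; split=> //; case: (letot g g).
move=> _ [t _ <-]; have := bx t; rewrite ler_norml; by case/andP.
Qed.

Lemma Iv_le1 {x : Gm -> R} {g a} : bnd x -> W g -> lt g a -> Iv x g a <= 1.
Proof.
move=> bx Wg ga; apply: le_trans (Iv_le bx Wg _ ga) _.
  by case: (letot g g).
by have := bx g; rewrite ler_norml; case/andP.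
Qed.

Lemma Lv_ub {x : Gm -> R} {g a} : bnd x -> W g -> lt g a -> Iv x g a <= Lv x a.
Proof.
move=> bx Wg ga; apply: (ub_le_sup); last by exists g.
by exists 1 => _ [t [Wt ta] <-]; exact: Iv_le1.
Qed.

Lemma Lv_le (x : Gm -> R) a c : (exists g, W g /\ lt g a) ->
  (forall g, W g -> lt g a -> Iv x g a <= c) -> Lv x a <= c.
Proof.
move=> [g [Wg ga]] H; apply: ge_sup; first by exists (Iv x g a), g.
by move=> _ [t [Wt ta] <-]; exact: H.
Qed.

Lemma Lv_norm (x : Gm -> R) a : bnd x -> (exists g, W g /\ lt g a) -> `|Lv x a| <= 1.
Proof.
move=> bx [g [Wg ga]]; rewrite ler_norml; apply/andP; split.
  exact: le_trans (Iv_ge bx Wg ga) (Lv_ub bx Wg ga).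
apply: Lv_le; first by exists g.
by move=> t Wt ta; exact: Iv_le1.
Qed.

Lemma Lv_lip (x y : Gm -> R) a d : bnd x -> bnd y ->
  (forall b, `|x b - y b| <= d) -> (exists g, W g /\ lt g a) ->
  Lv x a <= Lv y a + d.
Proof.
move=> bx byy dxy ne; apply: Lv_le => // g Wg ga.
rewrite -lerBlDr; apply: le_trans (Lv_ub byy Wg ga).
apply: lb_le_inf; first by exists (y g), g; split=> //; split=> //; case: (letot g g).
move=> _ [b [Wb [gb ba]] <-].
have : x b - y b <= d by apply: le_trans (dxy b); exact: ler_norm.
have := Iv_le bx Wb gb ba.
lra.
Qed.

Lemma Lv_eq (x : Gm -> R) a c d' : bnd x -> W d' -> lt d' a ->
  (forall b, W b -> le d' b -> lt b a -> x b = c) ->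
  (forall g, W g -> lt g a -> exists b, W b /\ le g b /\ lt b a /\ x b = c) ->
  Lv x a = c.
Proof.
move=> bx Wd da HA HB; apply/eqP; rewrite eq_le; apply/andP; split.
  apply: Lv_le; first by exists d'.
  by move=> g Wg ga; have [b [Wb [gb [ba <-]]]] := HB g Wg ga; exact: Iv_le.
apply: le_trans (Lv_ub bx Wd da).
apply: lb_le_inf; first by exists (x d'), d'; split=> //; split=> //; case: (letot d' d').
by move=> _ [b [Wb [db ba]] <-]; rewrite HA.
Qed.

End Liminf.
Section Wcons.
Variables (Gm U : Type) (C : set U) (e : nat -> U).
Hypothesis eC : forall i, C (e i).
Hypothesis einj : forall i j, e i = e j -> i = j.
Variable (le : Gm -> Gm -> Prop).
Hypothesis letot : forall x y, le x y \/ le y x.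
Hypothesis leanti : forall x y, le x y -> le y x -> x = y.
Hypothesis letrans : forall x y z, le x y -> le y z -> le x z.
Hypothesis lemin : forall S : set Gm, (exists x, S x) -> exists z, S z /\ forall y, S y -> le z y.
Let lt a b := le a b /\ a <> b.

Lemma W_exists (V : set Gm) : ~ myle V C -> exists W, W `<=` V /\ ~ myle W C /\
  (forall d, W d -> myle [set a | W a /\ le a d] C) /\
  (forall E, myle E C -> exists d, W d /\ forall a, E a -> W a -> lt a d).
Proof.
move=> nV.
pose seg a := [set b | V b /\ lt b a].
pose W := [set a | V a /\ myle (seg a) C].
have Wini : forall d, W d -> myle [set a | W a /\ le a d] C.
  move=> d [Vd sd]; apply: myle_trans (@small_U2 _ _ _ eC einj _ _ _ sd (@small_set1 _ _ _ eC _ d)).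
  apply: myle_sub => a [[Va _] ad].
  by have [->|nad] := pselect (a = d); [right|left].
have nW : ~ myle W C.
  move=> sW.
  have [[a [Va nWa]]|] := pselect (exists a, V a /\ ~ W a).
    have [a0 [[Va0 nWa0] a0min]] := lemin [set a | V a /\ ~ W a] (ex_intro (fun a => V a /\ ~ W a) a (conj Va nWa)).
    apply: nWa0; split => //; apply: myle_trans sW; apply: myle_sub.
    move=> b [Vb [ba0 nba0]]; apply: contrapT => nWb.
    by apply: nba0; exact: (leanti _ _ ba0 (a0min b (conj Vb nWb))).
  move=> H; apply: nV; apply: myle_trans sW; apply: myle_sub => a Va.
  by apply: contrapT => nWa; apply: H; exists a.
exists W; split; first by move=> a [].
split => //; split => // E sE.
apply: contrapT => /forallNP H.
apply: nW.
have cover : W `<=` \bigcup_(a in E `&` W) [set b | W b /\ le b a].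
  move=> d Wd; have := H d; move=> /not_andP [//|/existsNP [a /not_implyP [Ea /not_implyP [Wa nad]]]].
  exists a; first by split.
  split => //; have [da|ad] := letot d a; first by [].
  have [ead|nead] := pselect (a = d); first by rewrite ead; case: (letot d d).
  by case: nad.
apply: myle_trans (myle_sub _ _ cover) _.
apply: (@small_bigcup _ _ _ eC einj); first by apply: myle_trans sE; apply: myle_sub => a [].
by move=> a [_ Wa]; exact: Wini.
Qed.

End Wcons.
Section Fmap.
Variables (R : realType) (Gm U : Type) (C : set U).
Variable (le : Gm -> Gm -> Prop).
Hypothesis letot : forall x y, le x y \/ le y x.
Hypothesis leanti : forall x y, le x y -> le y x -> x = y.
Hypothesis letrans : forall x y z, le x y -> le y z -> le x z.
Hypothesis lemin : forall S : set Gm, (exists x, S x) -> exists z, S z /\ forall y, S y -> le z y.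
Hypothesis sm1 : forall g : Gm, myle [set g] C.
Hypothesis smU2 : forall X Y : set Gm, myle X C -> myle Y C -> myle (X `|` Y) C.
Variables (W1 W2 : set Gm) (m1 m2 : Gm).
Hypothesis W12 : forall g, W1 g -> W2 g -> False.
Hypothesis nW1 : ~ myle W1 C.
Hypothesis nW2 : ~ myle W2 C.
Hypothesis ini1 : forall d, W1 d -> myle [set a | W1 a /\ le a d] C.
Hypothesis ini2 : forall d, W2 d -> myle [set a | W2 a /\ le a d] C.
Hypothesis bnd1 : forall E, myle E C -> exists d, W1 d /\ forall a, E a -> W1 a -> le a d /\ a <> d.
Hypothesis bnd2 : forall E, myle E C -> exists d, W2 d /\ forall a, E a -> W2 a -> le a d /\ a <> d.
Hypothesis Wm1 : W1 m1.
Hypothesis Wm2 : W2 m2.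
Hypothesis m1min : forall y, W1 y -> le m1 y.
Hypothesis m2min : forall y, W2 y -> le m2 y.

Let lt a b := le a b /\ a <> b.

Definition Fm (x : Gm -> R) : Gm -> R := fun g =>
  if pselect (W1 g) then (if pselect (g = m1) then 1 else Lv R Gm le W1 x g)
  else if pselect (W2 g) then (if pselect (g = m2) then -1 else Lv R Gm le W2 x g)
  else x g.

Let bnd (x : Gm -> R) := forall b, `|x b| <= 1.

Let ne1 a : W1 a -> a <> m1 -> exists g, W1 g /\ le g a /\ g <> a.
Proof. by move=> Wa am; exists m1; split => //; split; [exact: m1min|move=> E; apply: am]. Qed.
Let ne2 a : W2 a -> a <> m2 -> exists g, W2 g /\ le g a /\ g <> a.
Proof. by move=> Wa am; exists m2; split => //; split; [exact: m2min|move=> E; apply: am]. Qed.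

Lemma Fm_norm x : bnd x -> forall g, `|Fm x g| <= 1.
Proof.
move=> bx g; rewrite /Fm; case: pselect => W1g /=.
  case: pselect => gm /=; first by rewrite normr1.
  by apply: Lv_norm => //; exact: ne1.
case: pselect => W2g /=; last exact: (bx g).
case: pselect => gm /=; first by rewrite normrN normr1.
by apply: Lv_norm => //; exact: ne2.
Qed.

Lemma Fm_lip x y (d : R) : bnd x -> bnd y -> (forall b, `|x b - y b| <= d) ->
  forall g, `|Fm x g - Fm y g| <= d.
Proof.
move=> bx byy dxy g.
have d0 : 0 <= d by apply: le_trans (dxy g).
have dyx : forall b, `|y b - x b| <= d by move=> b; rewrite distrC.
rewrite /Fm; case: pselect => W1g /=.
  case: pselect => gm /=; first by rewrite subrr normr0.
  have ne := ne1 g W1g gm.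
  have h1 := @Lv_lip R Gm le W1 letot x y g d bx byy dxy ne.
  have h2 := @Lv_lip R Gm le W1 letot y x g d byy bx
     dyx ne.
  rewrite ler_norml; apply/andP; split; lra.
case: pselect => W2g /=; last exact: (dxy g).
case: pselect => gm /=; first by rewrite subrr normr0.
have ne := ne2 g W2g gm.
have h1 := @Lv_lip R Gm le W2 letot x y g d bx byy dxy ne.
have h2 := @Lv_lip R Gm le W2 letot y x g d byy bx
   dyx ne.
rewrite ler_norml; apply/andP; split; lra.
Qed.

Let tail (W : set Gm) :
  (forall E, myle E C -> exists d, W d /\ forall a, E a -> W a -> le a d /\ a <> d) ->
  forall x c Ex, bnd x -> myle Ex C -> (forall g, ~ Ex g -> x g = c) ->
  exists d', W d' /\ forall g, W g -> ~ le g d' -> Lv R Gm le W x g = c.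
Proof.
move=> bndW x c Ex bx sE xc.
have [d1 [Wd1 Hd1]] := bndW _ sE.
have [d' [Wd' Hd']] := bndW _ (sm1 d1).
have [d1d' nd1d'] := Hd' d1 erefl Wd1.
have A : forall b, W b -> le d' b -> x b = c.
  move=> b Wb db; apply: xc => Eb; have [bd1 _] := Hd1 b Eb Wb.
  have eb : b = d1 by exact: (leanti _ _ bd1 (letrans _ _ _ d1d' db)).
  by subst b; apply: nd1d'; exact: (leanti _ _ d1d' db).
exists d'; split => // g Wg ngd.
have dg : le d' g by case: (letot g d').
have ndg : d' <> g by move=> E; subst g; apply: ngd; case: (letot d' d').
apply: (@Lv_eq R Gm le W letot x g c d') => //.
  by move=> b Wb db _; exact: A.
move=> t Wt [tg ntg]; have [td|dt] := letot t d'.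
  exists d'; split => //; split => //; split; first by split.
  by apply: A => //; case: (letot d' d').
exists t; split => //; split; first by case: (letot t t).
by split; [split|exact: A].
Qed.

Lemma Fm_X x c Ex : bnd x -> myle Ex C -> (forall g, ~ Ex g -> x g = c) ->
  exists Ef, myle Ef C /\ forall g, ~ Ef g -> Fm x g = c.
Proof.
move=> bx sE xc.
have [d1 [Wd1 H1]] := tail _ bnd1 _ _ _ bx sE xc.
have [d2 [Wd2 H2]] := tail _ bnd2 _ _ _ bx sE xc.
exists (Ex `|` [set a | W1 a /\ le a d1] `|` [set a | W2 a /\ le a d2]); split.
  by apply: smU2; [apply: smU2 => //; exact: ini1|exact: ini2].
move=> g nEf; rewrite /Fm; case: pselect => W1g /=.
  case: pselect => gm /=.
    by exfalso; apply: nEf; left; right; split; [by []|rewrite gm; exact: m1min].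
  by apply: H1 => // gd; apply: nEf; left; right.
case: pselect => W2g /=.
  case: pselect => gm /=.
    by exfalso; apply: nEf; right; split; [by []|rewrite gm; exact: m2min].
  by apply: H2 => // gd; apply: nEf; right.
by apply: xc => Eg; apply: nEf; left; left.
Qed.

Let chain_const (W : set Gm) (m : Gm) (v : R) x : W m -> (forall y, W y -> le m y) ->
  bnd x -> x m = v -> (forall g, W g -> g <> m -> x g = Lv R Gm le W x g) ->
  forall g, W g -> x g = v.
Proof.
move=> Wm mmin bx xm xL g Wg; apply: contrapT => xgv.
have [g0 [[Wg0 xg0] g0min]] := lemin [set g | W g /\ x g <> v] (ex_intro _ g (conj Wg xgv)).
have g0m : g0 <> m by move=> E; subst g0.
have B : forall b, W b -> le b g0 -> b <> g0 -> x b = v.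
  move=> b Wb bg0 nbg0; apply: contrapT => xb.
  by apply: nbg0; apply: (leanti _ _ bg0); apply: g0min.
apply: xg0; rewrite xL //.
apply: (@Lv_eq R Gm le W letot x g0 v m) => //.
- split; first exact: mmin.
  by move=> E; apply: g0m.
- by move=> b Wb _ [bg0 nbg0]; exact: B.
- move=> t Wt [tg ntg]; exists t; split => //; split; first by case: (letot t t).
  by split => //; exact: B.
Qed.

Lemma Fm_nofix x c Ex : bnd x -> myle Ex C -> (forall g, ~ Ex g -> x g = c) ->
  Fm x = x -> False.
Proof.
move=> bx sE xc Fx.
have fx : forall g, x g = Fm x g by move=> g; rewrite Fx.
have c1 : forall g, W1 g -> x g = 1.
  apply: (chain_const _ _ _ _ Wm1 m1min bx).
    by rewrite fx /Fm; case: pselect => // W1m /=; case: pselect.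
  move=> g W1g gm; rewrite {1}fx /Fm; case: pselect => // W1g' /=.
  by case: pselect.
have c2 : forall g, W2 g -> x g = -1.
  apply: (chain_const _ _ _ _ Wm2 m2min bx).
    rewrite fx /Fm; case: pselect => [W1m|nW1m] /=; first by case: (W12 _ W1m Wm2).
    by case: pselect => // W2m /=; case: pselect.
  move=> g W2g gm; rewrite {1}fx /Fm; case: pselect => [W1g|nW1g] /=.
    by case: (W12 _ W1g W2g).
  by case: pselect => // W2g' /=; case: pselect.
have e1 : c = 1.
  apply: contrapT => nc; apply: nW1; apply: myle_trans sE; apply: myle_sub => g W1g.
  by apply: contrapT => nE; apply: nc; rewrite -(xc g nE) c1.
have e2 : c = -1.
  apply: contrapT => nc; apply: nW2; apply: myle_trans sE; apply: myle_sub => g W2g.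
  by apply: contrapT => nE; apply: nc; rewrite -(xc g nE) c2.
by move: e2; rewrite e1 => h; move: (@ltr01 R); rewrite h oppr_gt0 ltr10.
Qed.

End Fmap.
Lemma gamma_map (R : realType) (Kappa Gamma : Type) (e : nat -> Kappa) :
  (forall i j, e i = e j -> i = j) -> myle [set: Kappa] [set: Gamma] ->
  ~ myle [set: Gamma] [set: Kappa] ->
  exists F : (Gamma -> R) -> (Gamma -> R),
   (forall x, (forall b, `|x b| <= 1) -> forall g, `|F x g| <= 1) /\
   (forall x y d, (forall b, `|x b| <= 1) -> (forall b, `|y b| <= 1) ->
      (forall b, `|x b - y b| <= d) -> forall g, `|F x g - F y g| <= d) /\
   (forall x c Ex, (forall b, `|x b| <= 1) -> myle Ex [set: Kappa] ->
      (forall g, ~ Ex g -> x g = c) ->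
      exists Ef, myle Ef [set: Kappa] /\ forall g, ~ Ef g -> F x g = c) /\
   (forall x c Ex, (forall b, `|x b| <= 1) -> myle Ex [set: Kappa] ->
      (forall g, ~ Ex g -> x g = c) -> F x = x -> False).
Proof.
move=> einj [j [_ jinj]] nGK.
pose C := [set: Kappa].
have eC : forall i, C (e i) by [].
have [le [letot [leanti [letrans lemin]]]] := wo_exists Gamma.
pose eG i := j (e i).
have eGinj : forall i i', eG i = eG i' -> i = i'.
  by move=> i i' /jinj => /(_ I I) /einj.
have [p [_ pinj]] := @sq_le Gamma (eG 0) [set: Gamma] eG (fun=> I) eGinj.
have pinj' : forall a b a' b', p (a,b) = p (a',b') -> a = a' /\ b = b'.
  by move=> a b a' b' /pinj => /(_ (conj I I) (conj I I)) [-> ->].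
pose V1 := [set p (g, eG 0) | g in [set: Gamma]].
pose V2 := [set p (g, eG 1) | g in [set: Gamma]].
have nV : forall k, ~ myle [set p (g, eG k) | g in [set: Gamma]] C.
  move=> k sV; apply: nGK; apply: myle_trans sV.
  exists (fun g => p (g, eG k)); split; first by move=> g _; exists g.
  by move=> a b _ _ /pinj' [].
have [W1 [W1V [nW1 [ini1 bnd1]]]] := @W_exists Gamma Kappa C e eC einj le letot leanti lemin _ (nV 0%N).
have [W2 [W2V [nW2 [ini2 bnd2]]]] := @W_exists Gamma Kappa C e eC einj le letot leanti lemin _ (nV 1%N).
have W12 : forall g, W1 g -> W2 g -> False.
  move=> g /W1V [a _ <-] /W2V [b _] /pinj' [_ /eGinj].
  done.
have neW : forall W : set Gamma, ~ myle W C -> exists x, W x.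
  move=> W nW; apply: contrapT => /forallNP H; apply: nW.
  by exists (fun=> e 0); split => // x y Wx; case: (H x).
have [m1 [Wm1 m1min]] := lemin _ (neW _ nW1).
have [m2 [Wm2 m2min]] := lemin _ (neW _ nW2).
have sm1 : forall g : Gamma, myle [set g] C := @small_set1 _ _ _ eC _.
have smU2 : forall X Y : set Gamma, myle X C -> myle Y C -> myle (X `|` Y) C :=
  @small_U2 _ _ _ eC einj _.
exists (Fm R Gamma le W1 W2 m1 m2); split; [|split; [|split]].
- exact: Fm_norm.
- move=> x y d bx byy dxy g; exact: Fm_lip.
- move=> x c Ex bx sE xc.
  exact: (@Fm_X R Gamma Kappa C le letot leanti letrans sm1 smU2 W1 W2 m1 m2 ini1 ini2 bnd1 bnd2 m1min m2min x c Ex bx sE xc).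
- move=> x c Ex bx sE xc.
  exact: (@Fm_nofix R Gamma Kappa C le letot leanti lemin W1 W2 m1 m2 W12 nW1 nW2 Wm1 Wm2 m1min m2min x c Ex bx sE xc).
Qed.
Lemma sn_ge {R : realType} {T : Type} {h : T -> R} {M : R} :
  (forall g, `|h g| <= M) -> forall g, `|h g| <= supnorm R T h.
Proof.
move=> hM g; apply: ub_le_sup; last by exists g.
by exists M => _ [t _ <-]; exact: hM.
Qed.

Lemma sn_le {R : realType} {T : Type} {h : T -> R} {M : R} (t0 : T) :
  (forall g, `|h g| <= M) -> supnorm R T h <= M.
Proof.
move=> hM; apply: ge_sup; first by exists `|h t0|, t0.
by move=> _ [t _ <-]; exact: hM.
Qed.

Lemma card_inh {T U} (A : set T) (B : set U) : (A #<= B)%card -> (exists a, A a) ->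
  exists b : U, B b.
Proof.
move=> /card_leP [f] [a Aa].
exists (val (f (SigSub (mem_set Aa)))).
exact: set_mem (valP (f (SigSub (mem_set Aa)))).
Qed.

Theorem mainTheorem8 (R : realType) (Kappa Gamma : Type) (K : topologicalType)
  (T : (K -> R) -> (Gamma -> R)) :
  infinite_set [set: Kappa] ->
  ([set: Kappa] #<= [set: Gamma])%card ->
  ~ ([set: Gamma] #<= [set: Kappa])%card ->
  compact [set: K] -> hausdorff_space K ->
  (* T is a linear surjective isometry C(K) -> X^{kappa,Gamma} *)
  (forall f, CK R K f -> Xkg R Kappa Gamma (T f)) ->
  (forall h, Xkg R Kappa Gamma h -> exists f, CK R K f /\ T f = h) ->
  (forall (a : R) f g, CK R K f -> CK R K g -> T (a *: f + g) = a *: T f + T g) ->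
  (forall f, CK R K f -> supnorm R Gamma (T f) = supnorm R K f) ->
  (* preserving pointwise multiplication and order *)
  (forall f g, CK R K f -> CK R K g -> T (f \* g) = T f \* T g) ->
  (forall f g, CK R K f -> CK R K g -> (ptle R K f g <-> ptle R Gamma (T f) (T g))) ->
  kappa_complete R Kappa K /\ ~ CK_BFPP R K.
Proof.
move=> Hinf HKG HnGK _ _ Tin Tsurj Tlin Tiso _ Tord.
have [k0 _] := infinite_setN0 Hinf.
have [e [_ einj']] := @card_myle _ _ [set: nat] [set: Kappa] k0 (proj1 (infiniteP _) Hinf).
have einj : forall i j, e i = e j -> i = j by move=> i j /einj'; apply.
have [g0 _] := card_inh _ _ HKG (ex_intro _ k0 I).
have KG : myle [set: Kappa] [set: Gamma] := @card_myle _ _ _ _ g0 HKG.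
have nGK : ~ myle [set: Gamma] [set: Kappa] by move=> /myle_card.
have Xbnd : forall h, Xkg R Kappa Gamma h -> exists M, forall g, `|h g| <= M.
  by move=> h [].
have Xsmall : forall h, Xkg R Kappa Gamma h ->
    exists c Ex, myle Ex [set: Kappa] /\ forall g, ~ Ex g -> h g = c.
  move=> h [_ [A [c [AK hc]]]]; exists c, A; split => //.
  by move: AK => /card_eqPle [/(@card_myle _ _ _ _ k0)].
have exactX : forall (h : Gamma -> R) M c Ef, (forall g, `|h g| <= M) ->
    myle Ef [set: Kappa] -> (forall g, ~ Ef g -> h g = c) -> Xkg R Kappa Gamma h.
  move=> h M c Ef hM sE hc; split; first by exists M.
  have [A [EA [AK KA]]] := @enlarge Kappa [set: Kappa] e (fun=> I) einj Gamma Ef sE KG.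
  exists A, c; split.
    by apply/card_eqPle; split; apply: myle_card.
  by move=> g nAg; apply: hc => Eg; apply: nAg; apply: EA.
have [F [Fn [Fl [FX Fnf]]]] := @gamma_map R Kappa Gamma e einj KG nGK.
split.
  move=> S SCK [f0 Sf0] SK [u [CKu uub]].
  have sS : myle S [set: Kappa] := @card_myle _ _ _ _ k0 SK.
  have [Af HAf] := pick_fun (set0, 0) (fun f (p : set Gamma * R) =>
     myle p.1 [set: Kappa] /\ forall g, ~ p.1 g -> T f g = p.2).
  have Afs : forall f, S f -> myle (Af f).1 [set: Kappa] /\
      forall g, ~ (Af f).1 g -> T f g = (Af f).2.
    move=> f Sf; apply: HAf.
    by have [c [Ex H]] := Xsmall _ (Tin f (SCK f Sf)); exists (Ex, c).
  have Tub : forall f, S f -> forall g, T f g <= T u g.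
    by move=> f Sf; apply/(Tord f u (SCK f Sf) CKu); exact: uub.
  pose s g := sup [set T f g | f in S].
  have hub : forall g, has_ubound [set T f g | f in S].
    by move=> g; exists (T u g) => _ [f Sf <-]; exact: Tub.
  have sge : forall f g, S f -> T f g <= s g.
    by move=> f g Sf; apply: ub_le_sup => //; exists f.
  have sle : forall g v, (forall f, S f -> T f g <= v) -> s g <= v.
    move=> g v H; apply: ge_sup; first by exists (T f0 g), f0.
    by move=> _ [f Sf <-]; exact: H.
  have Xs : Xkg R Kappa Gamma s.
    have [M0 HM0] := Xbnd _ (Tin f0 (SCK f0 Sf0)).
    have [Mu HMu] := Xbnd _ (Tin u CKu).
    apply: (exactX s (M0 + Mu) (sup [set (Af f).2 | f in S])
      (\bigcup_(f in S) (Af f).1)).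
    - move=> g; have h1 := HM0 g; have h2 := HMu g.
      have h3 := sge f0 g Sf0; have h4 := sle g (T u g) (fun f Sf => Tub f Sf g).
      move: h1 h2; rewrite !ler_norml => /andP [h1 h1'] /andP [h2 h2'].
      have M0p : 0 <= M0 by apply: le_trans (HM0 g).
      have Mup : 0 <= Mu by apply: le_trans (HMu g).
      apply/andP; split; lra.
    - apply: (@small_bigcup _ _ e (fun=> I) einj) => // f Sf.
      exact: (Afs f Sf).1.
    - move=> g nU; rewrite /s; congr sup; apply/seteqP; split => _ [f Sf <-];
        exists f => //; rewrite (Afs f Sf).2 //; move=> Afg; apply: nU; by exists f.
  have [s0 [CKs0 Ts0]] := Tsurj s Xs.
  exists s0; split => //; split.
    move=> f Sf; apply/(Tord f s0 (SCK f Sf) CKs0); rewrite Ts0 => g.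
    exact: sge.
  move=> u' CKu' ub'; apply/(Tord s0 u' CKs0 CKu'); rewrite Ts0 => g.
  apply: sle => f Sf; exact: ((Tord f u' (SCK f Sf) CKu').1 (ub' f Sf) g).
have [Tinv HTinv] := pick_fun (fun _ : K => (0:R)) (fun (h : Gamma -> R) (f : K -> R) => CK R K f /\ T f = h).
have TinvP : forall h, Xkg R Kappa Gamma h -> CK R K (Tinv h) /\ T (Tinv h) = h.
  by move=> h Xh; apply: HTinv; exact: Tsurj.
have CKsub : forall f g, CK R K f -> CK R K g -> CK R K (f - g).
  by move=> f g cf cg x; apply: continuousB; [exact: cf|exact: cg].
have Tsub : forall f g, CK R K f -> CK R K g -> T (f - g) = T f - T g.
  move=> f g cf cg; have := Tlin (-1) g f cg cf.
  by rewrite !scaleN1r addrC [- T g + _]addrC.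
have bnd_ball : forall f, ballCK R K f -> forall g, `|T f g| <= 1.
  move=> f [CKf nf] g; have [M HM] := Xbnd _ (Tin f CKf).
  by apply: le_trans (sn_ge HM g) _; rewrite Tiso.
have XF : forall f, ballCK R K f -> Xkg R Kappa Gamma (F (T f)).
  move=> f Bf; have [c [Ex [sE xc]]] := Xsmall _ (Tin f Bf.1).
  have [Ef [sEf Fc]] := FX _ c Ex (bnd_ball f Bf) sE xc.
  exact (exactX _ 1 c Ef (Fn _ (bnd_ball f Bf)) sEf Fc).
move=> BF.
pose Gf f := Tinv (F (T f)).
have Hball : forall f, ballCK R K f -> ballCK R K (Gf f).
  move=> f Bf; have [CKt Tt] := TinvP _ (XF f Bf); split => //.
  rewrite -Tiso // Tt; exact: (sn_le g0 (Fn _ (bnd_ball f Bf))).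
have Hne : forall f g, ballCK R K f -> ballCK R K g ->
    supnorm R K (Gf f - Gf g) <= supnorm R K (f - g).
  move=> f g Bf Bg.
  have [CKf Tf] := TinvP _ (XF f Bf); have [CKg Tg] := TinvP _ (XF g Bg).
  rewrite -Tiso; last exact: CKsub.
  rewrite -[supnorm R K (f - g)]Tiso; last exact: CKsub Bf.1 Bg.1.
  rewrite Tsub // Tf Tg Tsub; [|exact: Bf.1|exact: Bg.1].
  have bx := bnd_ball f Bf; have byy := bnd_ball g Bg.
  have b2 : forall b, `|(T f - T g) b| <= 2.
    move=> b; apply: le_trans (ler_normB _ _) _.
    by have := bx b; have := byy b; lra.
  apply: (sn_le g0) => a /=.
  apply: Fl => // b; exact: (sn_ge b2 b).
have [f [Bf Ff]] := BF Gf Hball Hne.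
have [c [Ex [sE xc]]] := Xsmall _ (Tin f Bf.1).
apply: (Fnf (T f) c Ex (bnd_ball f Bf) sE xc).
have [_ Tt] := TinvP _ (XF f Bf).
by rewrite -Tt; congr T; exact: Ff.
Qed.
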